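(* Let $(X,\|\cdot\|_X)$ be a Banach space and $\mathcal{K}\subset X$. If there exists $\gamma>0$ such that $\lim_{n\to\infty}d_n^\gamma(\mathcal{K})_X=0$, then $\mathcal{K}$ is totally bounded (i.e. its closure is compact).
   Context: $\mathcal{K}$ is totally bounded if for every $\varepsilon>0$ it is covered by finitely many closed balls of radius $\varepsilon$. For $k\ge1$ and a norm $\|\cdot\|_{Y_k}$ on $\mathbb{R}^k$ let $B_{Y_k}=\{y\in\mathbb{R}^k:\|y\|_{Y_k}\le1\}$. For $\gamma\ge0$, the fixed Lipschitz width is $d^\gamma(\mathcal{K},Y_k)_X=\inf_{\Phi}\sup_{f\in\mathcal{K}}\inf_{y\in B_{Y_k}}\|f-\Phi(y)\|_X\in[0,\infty]$, the infimum being over all maps $\Phi:B_{Y_k}\to X$ with $\|\Phi(y)-\Phi(y')\|_X\le\gamma\|y-y'\|_{Y_k}$ for all $y,y'\in B_{Y_k}$. The Lipschitz width is $d_n^\gamma(\mathcal{K})_X=\inf_{1\le k\le n}\inf_{\|\cdot\|_{Y_k}}d^\gamma(\mathcal{K},Y_k)_X$, where the inner infimum is over all norms on $\mathbb{R}^k$. *)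

(* Defs.v *)
From mathcomp Require Import all_boot all_order all_algebra.
From mathcomp Require Import all_classical all_reals all_analysis.
Set Implicit Arguments. Unset Strict Implicit. Unset Printing Implicit Defensive.
Import Order.TTheory GRing.Theory Num.Theory.
Import numFieldNormedType.Exports.
Local Open Scope classical_set_scope.
Local Open Scope ring_scope.

Definition is_norm (R : realType) (k : nat) (N : 'rV[R]_k -> R) : Prop :=
  [/\ forall y, 0 <= N y,
      forall y, N y = 0 -> y = 0,
      forall (a : R) y, N (a *: y) = `|a| * N y
    & forall y y', N (y + y') <= N y + N y'].

Definition unit_ball (R : realType) (k : nat) (N : 'rV[R]_k -> R) : set 'rV[R]_k :=
  [set y | N y <= 1].

Definition lipschitz_on_ball (R : realType) (X : normedModType R) (k : nat)
    (N : 'rV[R]_k -> R) (gamma : R) (Phi : 'rV[R]_k -> X) : Prop :=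
  forall y y', unit_ball N y -> unit_ball N y' ->
    `|Phi y - Phi y'| <= gamma * N (y - y').

(* sup_{f in K} inf_{y in B} ||f - Phi y||, as an element of [0, +oo]
   (0 is added to the set so that the supremum over an empty K is 0). *)
Definition approx_error (R : realType) (X : normedModType R) (K : set X) (k : nat)
    (N : 'rV[R]_k -> R) (Phi : 'rV[R]_k -> X) : \bar R :=
  ereal_sup (0%E |` [set ereal_inf [set (`|f - Phi y|)%:E | y in unit_ball N]
                    | f in K]).

Definition fixed_lip_width (R : realType) (X : normedModType R) (K : set X)
    (gamma : R) (k : nat) (N : 'rV[R]_k -> R) : \bar R :=
  ereal_inf [set approx_error K N Phi | Phi in lipschitz_on_ball N gamma].

Definition lip_width (R : realType) (X : normedModType R) (K : set X)
    (gamma : R) (n : nat) : \bar R :=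
  ereal_inf [set e | exists k : nat, exists N : 'rV[R]_k -> R,
      [/\ (1 <= k)%N, (k <= n)%N, is_norm N & e = fixed_lip_width K gamma N]].

Definition totally_bounded_set (R : realType) (X : normedModType R) (K : set X) : Prop :=
  forall eps : R, 0 < eps ->
    exists s : seq X, forall f, K f -> exists2 c, c \in s & `|f - c| <= eps.

(* Main.v *)
Require Import Defs.
From mathcomp Require Import all_boot all_order all_algebra.
From mathcomp Require Import all_classical all_reals all_analysis.
From mathcomp Require Import lra.
Import Order.TTheory GRing.Theory Num.Theory.
Import numFieldNormedType.Exports. Import Num.Def.
Local Open Scope classical_set_scope.
Local Open Scope ring_scope.

Section NormFacts.
Variables (R : realType) (k : nat) (N : 'rV[R]_k -> R).
Hypothesis hN : is_norm N.

Lemma N0 : N 0 = 0.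
Proof. case: hN => _ _ hZ _; by rewrite -(scale0r (0 : 'rV[R]_k)) hZ normr0 mul0r. Qed.

Lemma NN y : N (- y) = N y.
Proof. case: hN => _ _ hZ _; by rewrite -scaleN1r hZ normrN normr1 mul1r. Qed.

Lemma N_sum (I : Type) (r : seq I) (F : I -> 'rV[R]_k) :
  N (\sum_(i <- r) F i) <= \sum_(i <- r) N (F i).
Proof.
case: hN => _ _ _ hT.
elim: r => [|a r IH]; first by rewrite !big_nil N0.
rewrite !big_cons; apply: le_trans (hT _ _) _; exact: lerD.
Qed.

Lemma coord_le (y : 'rV[R]_k) i : `|y 0 i| <= `|y|.
Proof.
have /mapP[j Hj ->] : `|y 0 i| \in [seq `|y x.1 x.2| | x : 'I_1 * 'I_k].
  by apply/mapP; exists (0, i) => //=; rewrite mem_enum.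
by rewrite [leRHS]/normr /= mx_normrE; apply/bigmax_geP; right => /=; exists j.
Qed.

Lemma N_upper : exists C, 0 <= C /\ forall y, N y <= C * `|y|.
Proof.
case: hN => hpos _ hZ _.
exists (\sum_(i < k) N (delta_mx 0 i)); split; first by apply: sumr_ge0.
move=> y; rewrite {1}(row_sum_delta y). have h := N_sum _ (index_enum 'I_k) (fun j => y 0 j *: delta_mx 0 j). apply: le_trans h _.
rewrite mulr_suml; apply: ler_sum => i _; rewrite hZ mulrC.
by apply: ler_wpM2l => //; exact: coord_le.
Qed.

Lemma N_cont (c : 'rV[R]_k) : continuous (fun z : 'rV[R]_k => N (z - c)).
Proof.
case: hN => hpos _ hZ hT.
have [C [C0 hC]] := N_upper.
move=> x; apply/(@cvgrPdist_lt _ _ _ (nbhs (x : 'rV[R]_k)) (nbhs_filter x)) => e e0.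
have d0 : 0 < e / (C + 1) by apply: divr_gt0 => //; rewrite ltr_wpDl.
near=> t.
have : `|x - t| < e / (C + 1).
  by near: t; apply: (@cvgr_dist_lt _ _ _ (nbhs x) _ id) => //; exact: cvg_id.
move=> hxt.
have h1 : N (x - c) <= N (x - t) + N (t - c).
  by have := hT (x - t) (t - c); rewrite addrA subrK.
have h2 : N (t - c) <= N (x - t) + N (x - c).
  have e1 := NN (x - t); rewrite opprB in e1.
  by have := hT (t - x) (x - c); rewrite addrA subrK e1.
apply: (le_lt_trans (y := N (x - t))).
  by rewrite ler_norml; apply/andP; split; lra.
apply: le_lt_trans (hC _) _.
apply: (le_lt_trans (y := C * (e / (C + 1)))); first by apply: ler_wpM2l => //; exact: ltW.
rewrite mulrA ltr_pdivrMr ?ltr_wpDl //; nra.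
Unshelve. all: end_near.
Qed.

Lemma N_contN : continuous N.
Proof.
have -> : N = fun z => N (z - 0) by apply: funext => z; rewrite subr0.
exact: N_cont.
Qed.

Lemma N_lower : (0 < k)%N -> exists2 m, 0 < m & forall y, m * `|y| <= N y.
Proof.
move=> k0; case: hN => hpos hdef hZ hT.
pose S := [set y : 'rV[R]_k | `|y| = 1].
have S0 : S !=set0.
  pose i0 := Ordinal k0; pose e0 := delta_mx 0 i0 : 'rV[R]_k.
  have ne0 : `|e0| != 0.
    rewrite normr_eq0; apply/eqP => /matrixP /(_ 0 i0).
    by rewrite !mxE !eqxx /= => /eqP; rewrite oner_eq0.
  by exists (`|e0|^-1 *: e0); rewrite /S /= normrZ normfV normr_id mulVf.
have cS : compact S.
  apply: bounded_closed_compact.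
  - rewrite /bounded_near.
    by apply: (filterS _ (nbhs_pinfty_ge (num_real (1:R)))) => M hM y /= ->.
  - apply: (@preimage_closed _ _ (fun y : 'rV[R]_k => `|y|) [set x : R | x = 1]); last exact: closed_eq.
    by move=> y _; exact: norm_continuous.
have [c cS' hc] := EVT_min_rV S0 cS (continuous_subspaceT N_contN).
exists (N c).
  rewrite lt_def hpos andbT; apply/eqP => /hdef c0.
  by move: cS'; rewrite inE /S /= c0 normr0 => /esym/eqP; rewrite oner_eq0.
move=> y; have [->|y0] := eqVneq y 0; first by rewrite normr0 mulr0 hpos.
have ny : 0 < `|y| by rewrite normr_gt0.
have := hc (`|y|^-1 *: y); rewrite hZ normfV normr_id => h.
rewrite -ler_pdivlMr // [N y / _]mulrC; apply: h.
by rewrite inE /S /= normrZ normfV normr_id mulVf // gt_eqF.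
Qed.

Lemma ball_net : (0 < k)%N -> forall d : R, 0 < d ->
  exists s : seq 'rV[R]_k, (forall c, c \in s -> unit_ball N c) /\
    forall y, unit_ball N y -> exists2 c, c \in s & N (y - c) < d.
Proof.
move=> k0 d d0.
have [m m0 hm] := N_lower k0.
have cB : compact (unit_ball N).
  apply: bounded_closed_compact.
  - rewrite /bounded_near.
    apply: (filterS _ (nbhs_pinfty_ge (num_real (m^-1)))) => M hM y /= hy.
    apply: (@le_trans _ _ m^-1) => //.
    by rewrite -(ler_pM2l m0) mulfV ?gt_eqF //; exact: le_trans (hm y) hy.
  - have -> : unit_ball N = (fun z => N (z - 0)) @^-1` [set x | x <= 1].
      by apply: funext => z; rewrite /unit_ball /preimage /= subr0.
    apply: preimage_closed; [move=> ? _; exact: N_cont | exact: closed_le].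
move: cB; rewrite compact_cover => /(_ _ (unit_ball N) (fun c => [set z | N (z - c) < d])).
case.
- move=> c _.
  have -> : [set z | N (z - c) < d] = (fun z => N (z - c)) @^-1` [set x | x < d] by [].
  apply: open_comp; [by move=> ? _; exact: N_cont | exact: open_lt].
- by move=> y By; exists y => //=; rewrite subrr N0.
move=> D' D'B cov; exists (finmap.enum_fset D'); split.
  by move=> c cD; have := D'B c cD; rewrite inE.
by move=> y By; have [c cD hc] := cov y By; exists c.
Qed.
End NormFacts.

Theorem lemma2p9 (R : realType) (X : completeNormedModType R) (K : set X) :
  (exists gamma : R, 0 < gamma /\
     (fun n : nat => lip_width K gamma n) @ \oo --> (0 : \bar R)%E) ->
  totally_bounded_set K.
Proof.
move=> [g [g0 hcvg]] eps eps0.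
pose e := eps / 2.
have e0 : 0 < e by rewrite divr_gt0.
have : \forall n \near \oo, (lip_width K g n < e%:E)%E.
  apply: (hcvg [set x : \bar R | (x < e%:E)%E]); apply: open_ereal_lt'; by rewrite lte_fin.
move=> [n0 _ /(_ n0 (leqnn n0))].
move/ereal_inf_lt => [x [k [N [k1 kn hN ->]]] hlt].
move/ereal_inf_lt: hlt => [a [Phi hPhi <-]] happ.
have hf : forall f, K f -> exists2 y, unit_ball N y & `|f - Phi y| < e.
  move=> f Kf.
  have : (ereal_inf [set (`|f - Phi y|)%:E | y in unit_ball N] < e%:E)%E.
    apply: le_lt_trans happ; apply: ereal_sup_ubound; right; by exists f.
  by move/ereal_inf_lt => [_ [y By <-]]; rewrite lte_fin => h; exists y.
have [s [sB scov]] := @ball_net R k N hN k1 _ (divr_gt0 e0 g0).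
exists [seq Phi c | c <- s] => f Kf.
have [y By hy] := hf f Kf.
have [c cs hc] := scov y By.
exists (Phi c); first exact: map_f.
have -> : f - Phi c = (f - Phi y) + (Phi y - Phi c) by rewrite addrA subrK.
apply: le_trans (ler_normD _ _) _.
have h2 : `|Phi y - Phi c| <= e.
  apply: le_trans (hPhi _ _ By (sB c cs)) _.
  rewrite -ler_pdivlMl //  mulrC; exact: ltW.
have -> : eps = e + e by rewrite /e; exact: splitr.
by apply: lerD => //; exact: ltW.
Qed.
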